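(* Let $\phi\in\mathrm{LTL}[\mathsf{X},\mathsf{wX},\mathsf{F},\mathsf{G}]$ and $k\in\mathbb N$. Suppose there are $A,B\subseteq\Sigma^+$ such that $\phi$ separates $A$ from $B$, and every deduction tree of $\langle A,B\rangle$ has size at least $k$. Then $\mathrm{size}(\phi)\ge k$.
   Context: Let $AP$ be a finite set of atomic propositions and $\Sigma=2^{AP}$. Formulae of $\mathrm{LTL}[\mathsf{X},\mathsf{wX},\mathsf{F},\mathsf{G}]$ are generated by $\phi::=p\mid\neg p\mid\phi\lor\phi\mid\phi\land\phi\mid\mathsf{X}\phi\mid\mathsf{wX}\phi\mid\mathsf{F}\phi\mid\mathsf{G}\phi$ ($p\in AP$), interpreted on $\sigma\in\Sigma^+$ at positions $0\le i<|\sigma|$: literals/Booleans as usual; $\mathsf{X}\phi$: $i+1<|\sigma|$ and $\phi$ at $i+1$; $\mathsf{wX}\phi$: $i+1=|\sigma|$ or $\phi$ at $i+1$; $\mathsf{F}\phi$/$\mathsf{G}\phi$: $\phi$ at some/every $j$ with $i\le j<|\sigma|$. Size: literals 1, unary operators add 1, binary connectives sum sizes plus 1. For $C\subseteq\Sigma^+$, $C\models\phi$ means $\sigma,0\models\phi$ for all $\sigma\in C$ and $C\perp\phi$ means $\sigma,0\not\models\phi$ for all $\sigma\in C$; $\phi$ separates $A$ from $B$ if $A\models\phi$ and $B\perp\phi$. Notation: $\sigma^{(j)}$ is the suffix of $\sigma$ starting at position $j$; $A^{\mathsf X}=\{\sigma^{(1)}:\sigma\in A,|\sigma|\ge2\}$;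 $A^{\mathsf G}=\{\sigma^{(j)}:\sigma\in A,0\le j<|\sigma|\}$; a future point for $A$ is $f:A\to\mathbb N$ with $f(\sigma)<|\sigma|$, and $A^f=\{\sigma^{(f(\sigma))}:\sigma\in A\}$. Proof system on terms $\langle A,B\rangle$ ($A,B\subseteq\Sigma^+$) with rules: Atomic: $\langle A,B\rangle$ if $A\models\alpha$, $B\perp\alpha$ for a literal $\alpha$; Or: $\langle A_1\uplus A_2,B\rangle$ from $\langle A_1,B\rangle,\langle A_2,B\rangle$; And: $\langle A,B_1\uplus B_2\rangle$ from $\langle A,B_1\rangle,\langle A,B_2\rangle$; Next: $\langle A,B\rangle$ from $\langle A^{\mathsf X},B^{\mathsf X}\rangle$ if $|A^{\mathsf X}|=|A|$; WeakNext: $\langle A,B\rangle$ from $\langle A^{\mathsf X},B^{\mathsf X}\rangle$ if $|B^{\mathsf X}|=|B|$; Future: $\langle A,B\rangle$ from $\langle A^f,B^{\mathsf G}\rangle$, $f$ a future point for $A$; Globally: $\langle A,B\rangle$ from $\langle A^{\mathsf G},B^f\rangle$, $f$ a future point for $B$ ($\uplus$ is disjoint union). A deduction tree for $\langle A,B\rangle$ is a finite tree of rule applications rooted at $\langle A,B\rangle$ in which every hypothesis is itself derived; its size is the number of rule applications. *)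

(* Defs.v *)
From mathcomp Require Import all_boot.
Set Implicit Arguments. Unset Strict Implicit. Unset Printing Implicit Defensive.

Section LTL.
Variable AP : finType.

(* letters of Sigma = 2^AP, words are sequences of letters *)
Definition letter := {set AP}.
Definition word := seq letter.
Definition lang := word -> Prop.

Inductive ltl : Type :=
| Lit of AP
| NLit of AP
| Or of ltl & ltl
| And of ltl & ltl
| Next of ltl
| WNext of ltl
| Fut of ltl
| Glob of ltl.

Fixpoint ltl_size (phi : ltl) : nat :=
  match phi with
  | Lit _ | NLit _ => 1
  | Or a b | And a b => (ltl_size a + ltl_size b).+1
  | Next a | WNext a | Fut a | Glob a => (ltl_size a).+1
  end.

(* sigma, i |= phi  (only meaningful for i < size sigma) *)
Fixpoint sat (s : word) (i : nat) (phi : ltl) : Prop :=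
  match phi with
  | Lit p => p \in nth set0 s i
  | NLit p => p \notin nth set0 s i
  | Or a b => sat s i a \/ sat s i b
  | And a b => sat s i a /\ sat s i b
  | Next a => i.+1 < size s /\ sat s i.+1 a
  | WNext a => i.+1 = size s \/ sat s i.+1 a
  | Fut a => exists j, i <= j < size s /\ sat s j a
  | Glob a => forall j, i <= j < size s -> sat s j a
  end.

Definition is_lit (phi : ltl) : bool :=
  match phi with Lit _ | NLit _ => true | _ => false end.

Definition models (C : lang) (phi : ltl) := forall s, C s -> sat s 0 phi.
Definition perp (C : lang) (phi : ltl) := forall s, C s -> ~ sat s 0 phi.
Definition separates (phi : ltl) (A B : lang) := models A phi /\ perp B phi.

Definition nonempty_words (C : lang) := forall s, C s -> s <> [::].

Definition suffix (s : word) (j : nat) : word := drop j s.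

Definition langX (C : lang) : lang :=
  fun t => exists2 s, C s & 2 <= size s /\ t = suffix s 1.
Definition langG (C : lang) : lang :=
  fun t => exists2 s, C s & exists2 j, j < size s & t = suffix s j.
Definition future_point (C : lang) (f : word -> nat) :=
  forall s, C s -> f s < size s.
Definition langF (C : lang) (f : word -> nat) : lang :=
  fun t => exists2 s, C s & t = suffix s (f s).

Definition disj_union (C C1 C2 : lang) :=
  (forall s, C s <-> C1 s \/ C2 s) /\ (forall s, C1 s -> C2 s -> False).

(* derivation A B n : there is a deduction tree for <A,B> with n rule
   applications.  The side conditions |A^X| = |A| resp. |B^X| = |B| are
   read as "every word of A (resp. B) has length >= 2". *)
Inductive derivation : lang -> lang -> nat -> Prop :=
| R_atomic (A B : lang) (alpha : ltl) :
    is_lit alpha -> models A alpha -> perp B alpha -> derivation A B 1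
| R_or (A A1 A2 B : lang) n1 n2 :
    disj_union A A1 A2 -> derivation A1 B n1 -> derivation A2 B n2 ->
    derivation A B (n1 + n2).+1
| R_and (A B B1 B2 : lang) n1 n2 :
    disj_union B B1 B2 -> derivation A B1 n1 -> derivation A B2 n2 ->
    derivation A B (n1 + n2).+1
| R_next (A B : lang) n :
    (forall s, A s -> 2 <= size s) ->
    derivation (langX A) (langX B) n -> derivation A B n.+1
| R_wnext (A B : lang) n :
    (forall s, B s -> 2 <= size s) ->
    derivation (langX A) (langX B) n -> derivation A B n.+1
| R_future (A B : lang) (f : word -> nat) n :
    future_point A f ->
    derivation (langF A f) (langG B) n -> derivation A B n.+1
| R_globally (A B : lang) (f : word -> nat) n :
    future_point B f ->
    derivation (langG A) (langF B f) n -> derivation A B n.+1.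

End LTL.

(* Main.v *)
From Stdlib Require Import Classical ClassicalEpsilon.
Require Import Defs.
From mathcomp Require Import all_boot.
From mathcomp Require Import zify.

Lemma sat_drop (AP : finType) (phi : ltl AP) : forall (s : word AP) j i,
  sat (drop j s) i phi <-> sat s (i + j) phi.
Proof.
elim: phi => [p|p|a IHa b IHb|a IHa b IHb|a IH|a IH|a IH|a IH] s j i /=.
- by rewrite nth_drop addnC.
- by rewrite nth_drop addnC.
- by rewrite IHa IHb.
- by rewrite IHa IHb.
- rewrite IH size_drop addSn; split => -[H1 H2]; split => //; move: H1; lia.
- rewrite IH size_drop addSn; split => -[H1|H2]; (try by right); left; move: H1; lia.
- split => -[k [Hk Hs]].
  + exists (k + j); split; first (move: Hk; rewrite size_drop; lia). by rewrite -IH.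
  + exists (k - j); split; first (rewrite size_drop; move: Hk; lia).
    rewrite IH. have -> : k - j + j = k by lia. done.
- split => H k Hk.
  + have -> : k = (k - j) + j by move: Hk; lia. rewrite -IH; apply: H.
    rewrite size_drop; move: Hk; lia.
  + rewrite IH; apply: H; rewrite size_drop in Hk; move: Hk; lia.
Qed.

Lemma sat_suffix (AP : finType) (phi : ltl AP) s j :
  sat (Defs.suffix s j) 0 phi <-> sat s j phi.
Proof. by rewrite /Defs.suffix sat_drop add0n. Qed.

Lemma main (AP : finType) (phi : ltl AP) : forall (A B : lang AP),
  nonempty_words A -> nonempty_words B -> separates phi A B ->
  derivation A B (ltl_size phi).
Proof.
elim: phi => [p|p|a IHa b IHb|a IHa b IHb|a IH|a IH|a IH|a IH] A B nA nB [HA HB] /=.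
- by apply: (@R_atomic _ A B (Lit p)).
- by apply: (@R_atomic _ A B (NLit p)).
- apply: (@R_or _ A (fun s => A s /\ sat s 0 a) (fun s => A s /\ ~ sat s 0 a)).
  + split; last by move=> s [_ ?] [_ ?].
    move=> s; split; last by case=> -[].
    by move=> As; case: (classic (sat s 0 a)) => H; [left|right].
  + apply: IHa => //; first by move=> s [/nA].
    split; first by move=> s [].
    by move=> s Bs H; apply: (HB s Bs); left.
  + apply: IHb => //; first by move=> s [/nA].
    split; first by move=> s [As Hn]; case: (HA s As).
    by move=> s Bs H; apply: (HB s Bs); right.
- apply: (@R_and _ A B (fun s => B s /\ ~ sat s 0 a) (fun s => B s /\ sat s 0 a)).
  + split; last by move=> s [_ ?] [_ ?].
    move=> s; split; last by case=> -[].
    by move=> Bs; case: (classic (sat s 0 a)) => H; [right|left].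
  + apply: IHa => //; first by move=> s [/nB].
    split; first by move=> s As; case: (HA s As).
    by move=> s [].
  + apply: IHb => //; first by move=> s [/nB].
    split; first by move=> s As; case: (HA s As).
    by move=> s [Bs Ha] Hb; apply: (HB s Bs).
- apply: R_next; first by move=> s /HA [].
  apply: IH.
  + move=> t [s _ [Hs ->]]; rewrite /Defs.suffix => E.
    have := size_drop 1 s; rewrite E /=; lia.
  + move=> t [s _ [Hs ->]]; rewrite /Defs.suffix => E.
    have := size_drop 1 s; rewrite E /=; lia.
  + split.
    * by move=> t [s As [_ ->]]; rewrite sat_suffix; case: (HA s As).
    * move=> t [s Bs [Hs ->]]; rewrite sat_suffix => H; apply: (HB s Bs); by split.
- have Bsz : forall s, B s -> 2 <= size s.
    move=> s Bs; have := nB s Bs; have := HB s Bs.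
    case: s Bs => [|x [|y s]] //= Bs H _; exfalso; apply: H; by left.
  apply: R_wnext => //.
  apply: IH.
  + move=> t [s _ [Hs ->]]; rewrite /Defs.suffix => E.
    have := size_drop 1 s; rewrite E /=; lia.
  + move=> t [s _ [Hs ->]]; rewrite /Defs.suffix => E.
    have := size_drop 1 s; rewrite E /=; lia.
  + split.
    * move=> t [s As [Hs ->]]; rewrite sat_suffix; case: (HA s As) => // E; lia.
    * move=> t [s Bs [Hs ->]]; rewrite sat_suffix => H; apply: (HB s Bs); by right.
- pose f := fun s : word AP => epsilon (inhabits 0) (fun j => j < size s /\ sat s j a).
  have Hf : forall s, A s -> f s < size s /\ sat s (f s) a.
    move=> s As; apply: (epsilon_spec (inhabits 0) (fun j => j < size s /\ sat s j a)); case: (HA s As) => j [Hj Hs].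
    exists j; split => //; move: Hj; lia.
  apply: (@R_future _ A B f); first by move=> s /Hf [].
  apply: IH.
  + move=> t [s As ->]; rewrite /Defs.suffix => E.
    have := size_drop (f s) s; rewrite E /=; have := Hf s As; lia.
  + move=> t [s Bs [j Hj ->]]; rewrite /Defs.suffix => E.
    have := size_drop j s; rewrite E /=; lia.
  + split.
    * by move=> t [s As ->]; rewrite sat_suffix; case: (Hf s As).
    * move=> t [s Bs [j Hj ->]]; rewrite sat_suffix => H; apply: (HB s Bs).
      exists j; split => //; lia.
- pose f := fun s : word AP => epsilon (inhabits 0) (fun j => j < size s /\ ~ sat s j a).
  have Hf : forall s, B s -> f s < size s /\ ~ sat s (f s) a.
    move=> s Bs; apply: (epsilon_spec (inhabits 0) (fun j => j < size s /\ ~ sat s j a)); have := HB s Bs.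
    move=> H; apply: NNPP => Hn; apply: H => j Hj.
    apply: NNPP => Hs; apply: Hn; exists j; split => //; lia.
  apply: (@R_globally _ A B f); first by move=> s /Hf [].
  apply: IH.
  + move=> t [s As [j Hj ->]]; rewrite /Defs.suffix => E.
    have := size_drop j s; rewrite E /=; lia.
  + move=> t [s Bs ->]; rewrite /Defs.suffix => E.
    have := size_drop (f s) s; rewrite E /=; have := Hf s Bs; lia.
  + split.
    * move=> t [s As [j Hj ->]]; rewrite sat_suffix; apply: (HA s As); lia.
    * by move=> t [s Bs ->]; rewrite sat_suffix; case: (Hf s Bs).
Qed.

Theorem corollary2 (AP : finType) (phi : ltl AP) (k : nat) (A B : lang AP) :
  nonempty_words A -> nonempty_words B ->
  separates phi A B ->
  (forall n, derivation A B n -> k <= n) ->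
  k <= ltl_size phi.
Proof.
move=> nA nB Hs H; apply: H; exact: main.
Qed.
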